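(* Let $n$ be a positive integer and let $a_1,a_2,\ldots,a_n$ be strictly positive real numbers. Let $A_R(n)=[A_R(i,j)]_{i,j=1}^n$ be the matrix with $A_R(i,j)=1$ if $j=1$ and $i\neq 1$; $A_R(i,j)=a_i$ if $i\mid j$; and $A_R(i,j)=0$ otherwise. Then \[ \det(A_R(n))=\left(\prod_{j=1}^n a_j\right)\left[1+\sum_{k=2}^{n}\frac{\mu(k)}{a_k}\right]. \]
   Context: $\mu$ denotes the Möbius function: $\mu(1)=1$, $\mu(j)=0$ if $j$ has a repeated prime factor, and $\mu(j)=(-1)^k$ if $j$ is a product of $k$ distinct primes. *)

(* Defs.v *)
From HB Require Import structures.
From mathcomp Require Import all_boot all_order all_algebra.
Set Implicit Arguments. Unset Strict Implicit. Unset Printing Implicit Defensive.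
Import Order.TTheory GRing.Theory Num.Theory.

Definition mobius (k : nat) : int :=
  if (0 < k)%N && all (fun p => logn p k == 1%N) (primes k)
  then ((-1) ^+ size (primes k))%R else 0%R.

Local Open Scope ring_scope.

(* A_R(n), with 1-based indices: the entry (i,j) of the paper is the entry
   (i-1, j-1) of this matrix, i.e. row index i : 'I_n stands for i.+1. *)
Definition A_R (R : nzRingType) (n : nat) (a : nat -> R) : 'M[R]_n :=
  \matrix_(i < n, j < n)
    if (j.+1 == 1)%N && (i.+1 != 1)%N then 1
    else if (i.+1 %| j.+1)%N then a i.+1 else 0.

(* Main.v *)
Require Import Defs.
From HB Require Import structures.
From mathcomp Require Import all_boot all_order all_algebra.
Import Order.TTheory GRing.Theory Num.Theory.
Lemma mob_p2 p e : prime p -> (0 < e)%N -> (p %| e)%N -> mobius (p * e) = 0%R.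
Proof.
move=> pp e0 pe; rewrite /mobius.
have pe0 : (0 < p * e)%N by rewrite muln_gt0 prime_gt0.
case: ifP => // /andP[_ /allP H].
have : p \in primes (p * e) by rewrite mem_primes pp pe0 dvdn_mulr.
move/H => /eqP. rewrite lognM ?(prime_gt0 pp) // logn_prime // eqxx.
have : (0 < logn p e)%N by rewrite -(pfactor_dvdn 1) // expn1.
by case: (logn p e).
Qed.

Lemma mob_p1 p e : prime p -> (0 < e)%N -> ~~ (p %| e)%N ->
  mobius (p * e) = (- mobius e)%R.
Proof.
move=> pp e0 pe; rewrite /mobius.
have pe0 : (0 < p * e)%N by rewrite muln_gt0 prime_gt0.
have pn : p \notin primes e by rewrite mem_primes pp e0 (negPf pe) andbF.
have Hp : perm_eq (primes (p * e)) (p :: primes e).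
  apply: uniq_perm; first exact: primes_uniq.
    by rewrite /= pn primes_uniq.
  move=> q; rewrite primesM ?(prime_gt0 pp) // primes_prime // in_cons inE.
  by rewrite in_nil orbF.
rewrite (perm_all _ Hp) (perm_size Hp) /= pe0 e0 /=.
rewrite lognM ?(prime_gt0 pp) // logn_prime // eqxx.
have -> : logn p e = 0%N.
  by rewrite lognE (negPf pe) !andbF.
rewrite eqxx /=.
have -> : all (fun q => logn q (p * e) == 1%N) (primes e)
        = all (fun q => logn q e == 1%N) (primes e).
  apply: eq_in_all => q qe; rewrite lognM ?(prime_gt0 pp) // logn_prime //.
  have -> : (q == p) = false.
    by apply/negbTE; apply: contraNneq pn => <-.
  by [].
by case: ifP => _; rewrite ?oppr0 // exprS mulN1r.
Qed.

Lemma mob1 : mobius 1 = 1%R.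
Proof. by []. Qed.

Lemma mob_sum j : (1 < j)%N -> (\sum_(d <- divisors j) mobius d = 0)%R.
Proof.
move=> j1.
set p := pdiv j; have pp : prime p by apply: pdiv_prime.
have pj : (p %| j)%N by apply: pdiv_dvd.
set m := (j %/ p)%N.
have jE : j = (p * m)%N by rewrite mulnC divnK.
have m0 : (0 < m)%N by rewrite divn_gt0 ?prime_gt0 // dvdn_leq // ltnW.
have j0 : (0 < j)%N by apply: ltnW.
have H1 : perm_eq (divisors j)
   ([seq d <- divisors j | ~~ (p %| d)%N] ++ map (muln p) (divisors m)).
  apply: uniq_perm; first exact: divisors_uniq.
    rewrite cat_uniq filter_uniq ?divisors_uniq //= map_inj_uniq ?divisors_uniq //; last first.
      by move=> x y /eqP; rewrite eqn_pmul2l ?prime_gt0 // => /eqP.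
    rewrite andbT; apply/hasPn => x /mapP [e _ ->]; rewrite mem_filter.
    by rewrite dvdn_mulr.
  move=> d; rewrite mem_cat mem_filter -!dvdn_divisors //.
  case pd: (p %| d)%N => /=.
    apply/idP/mapP.
      move=> dj; move: pd => /dvdnP [e de]; exists e.
        by rewrite -dvdn_divisors // -(@dvdn_pmul2l p) ?prime_gt0 // -jE mulnC -de.
      by rewrite de mulnC.
    move=> [e]; rewrite -dvdn_divisors // => em ->.
    by rewrite jE dvdn_pmul2l // prime_gt0.
  case dj: (d %| j)%N => //=.
  by apply/esym/negbTE/mapP => [[e _ de]]; move: pd; rewrite de dvdn_mulr.
rewrite (perm_big _ H1) big_cat /= big_filter big_map.
have H2 : perm_eq [seq d <- divisors j | ~~ (p %| d)%N]
                  [seq d <- divisors m | ~~ (p %| d)%N].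
  apply: uniq_perm; rewrite ?filter_uniq ?divisors_uniq //.
  move=> d; rewrite !mem_filter -!dvdn_divisors //.
  case pd: (p %| d)%N => //=.
  rewrite jE Gauss_dvdr //.
  by rewrite coprime_sym prime_coprime // pd.
rewrite -big_filter (perm_big _ H2) big_filter.
have pos : forall e, e \in divisors m -> (0 < e)%N.
  move=> e; rewrite -dvdn_divisors //; case: e => //; rewrite dvd0n => /eqP h.
  by rewrite h in m0.
have -> : (\sum_(i <- divisors m) mobius (p * i)
     = - \sum_(d <- divisors m | ~~ (p %| d)%N) mobius d)%R.
  rewrite (bigID (fun e => (p %| e)%N)) /= big_seq_cond big1 ?add0r; last first.
    by move=> e /andP[em pe]; apply: mob_p2 => //; apply: pos.
  rewrite -sumrN big_seq_cond [RHS]big_seq_cond.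
  by apply: eq_bigr => e /andP[em pe]; apply: mob_p1 => //; apply: pos.
by rewrite addrN.
Qed.

Lemma mob_range J N : (1 < J)%N -> (J <= N.+1)%N ->
  (\sum_(k < N | (k.+2 %| J)%N) mobius k.+2 = -1)%R.
Proof.
move=> J1 JN.
have J0 : (0 < J)%N by apply: ltnW.
have H : perm_eq (divisors J) [seq d <- index_iota 0 N.+2 | (d %| J)%N].
  apply: uniq_perm; rewrite ?filter_uniq ?divisors_uniq ?iota_uniq //.
  move=> d; rewrite mem_filter -dvdn_divisors // mem_index_iota /=.
  case dJ: (d %| J)%N => //=.
  by rewrite ltnS (leq_trans (dvdn_leq J0 dJ)).
have := @mob_sum J J1; rewrite (perm_big _ H) big_filter big_mkcond /=.
rewrite big_nat_recl // big_nat_recl // dvd0n eqn0Ngt J0 /= dvd1n /= add0r.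
rewrite big_mkord mob1 => /eqP; rewrite addrC addr_eq0 => /eqP <-.
by rewrite big_mkcond.
Qed.

Local Open Scope ring_scope.

Theorem theorem6 (R : realFieldType) (n : nat) (a : nat -> R)
  (hn : (0 < n)%N) (ha : forall i, (1 <= i <= n)%N -> 0 < a i) :
  \det (A_R n a) =
    (\prod_(1 <= j < n.+1) a j) * (1 + \sum_(2 <= k < n.+1) (mobius k)%:~R / a k).
Proof.
case: n hn ha => // m _ ha.
set A := A_R m.+1 a.
have an0 : forall k : 'I_m, a k.+2 != 0.
  by move=> k; rewrite gt_eqF // ha //= ltnS (ltn_ord k).
pose c (k : 'I_m.+1) := a 1 * (mobius k.+1)%:~R / a k.+1.
pose N := \matrix_(i < m.+1, k < m.+1) (if (i == ord0) && (k != ord0) then c k else 0 : R).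
pose E := 1%:M + N.
have dE : \det E = 1.
  rewrite -det_tr det_trig; last first.
    apply/is_trig_mxP => i j ij; rewrite !mxE.
    have -> : (j == i) = false by apply/negbTE; rewrite neq_ltn ij orbT.
    have -> : (j == ord0) = false by apply/negbTE; apply: contraTneq ij => ->.
    by rewrite /= addr0.
  apply: big1 => i _; rewrite !mxE eqxx /=.
  by case: (i == ord0); rewrite /= ?andbF addr0.
set B := E *m A.
have dB : \det A = \det B by rewrite det_mulmx dE mul1r.
have BE : forall i j, B i j = A i j + \sum_k N i k * A k j.
  by move=> i j; rewrite /B /E mulmxDl mul1mx !mxE.
clearbody B.
have B0j : forall j : 'I_m, B ord0 (lift ord0 j) = 0.
  move=> j; rewrite BE big_ord_recl !mxE eqxx /= mul0r add0r.
  under eq_bigr => k _ do rewrite !mxE /= .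
  rewrite /bump /= !add1n dvd1n.
  have -> : \sum_(k < m) c (lift ord0 k) *
     (if (k.+2 %| j.+2)%N then a k.+2 else 0)
     = a 1 * ((\sum_(k < m | (k.+2 %| j.+2)%N) mobius k.+2)%:~R).
    rewrite rmorph_sum mulr_sumr [RHS]big_mkcond /=; apply: eq_bigr => k _.
    rewrite /c /= /bump /= ?add1n; case: ifP => _; last by rewrite !mulr0.
    by rewrite divfK.
  rewrite mob_range //; last by rewrite ltnS (ltn_ord j).
  by rewrite mulrN1 addrN.
have Brow : forall i j, i != ord0 -> B i j = A i j.
  move=> i j i0; rewrite BE big1 ?addr0 // => k _.
  by rewrite mxE (negPf i0) mul0r.
have B00 : B ord0 ord0 = a 1 * (1 + \sum_(k < m) (mobius k.+2)%:~R / a k.+2).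
  rewrite BE big_ord_recl !mxE eqxx /= mul0r add0r.
  rewrite mulrDr mulr1 mulr_sumr; congr (_ + _); apply: eq_bigr => k _.
  rewrite !mxE /c /= /bump /= ?add1n mulr1 mulrA.
  by [].
have M : \det (row' ord0 (col' ord0 B)) = \prod_(i < m) a i.+2.
  rewrite -det_tr det_trig; last first.
    apply/is_trig_mxP => i j ij; rewrite !mxE Brow // /A !mxE /= /bump /= ?add1n.
    case: ifP => // /(dvdn_leq (ltn0Sn _)); rewrite !ltnS leqNgt ij //.
  apply: eq_bigr => i _; rewrite !mxE Brow // /A !mxE /= /bump /= ?add1n.
  by rewrite dvdnn.
rewrite dB (expand_det_row _ ord0) big_ord_recl big1 ?addr0; last first.
  by move=> j _; rewrite B0j mul0r.
rewrite /cofactor B00 M /= expr0 mul1r.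
rewrite !big_add1 /= big_mkord big_ord_recl big_mkord.
rewrite mulrAC; congr (_ * _ * _).
Qed.
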